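(* Let $p$ be a prime and $n\ge 1$ an integer. Then $$\mathrm{ord}_p(\overline{F}_n)=\sum_{b=1}^{\lfloor\log_p n\rfloor}\ \sum_{a=1}^{\lfloor n/p^b\rfloor}\left(\varphi(ap^b)\Big(2-\Big\lfloor\frac{n}{ap^b}\Big\rfloor\Big)-\sum_{j\mid ap}\mu(j)\Big\lfloor\frac{d}{j}\Big\rfloor\right),$$ where, for each pair $(a,b)$, $d=d(a,b)$ denotes the unique integer with $0\le d<ap^b$ and $d\equiv n \pmod{ap^b}$.
   Context: $\overline{F}_n=\Big(\prod_{1\le h\le k\le n,\ \gcd(h,k)=1}\frac{h}{k}\Big)^{-1}$ is the reciprocal of the product of all nonzero Farey fractions of order $n$. For a nonzero rational $x$, $\mathrm{ord}_p(x)$ is the exponent of $p$ in $x$ (possibly negative). $\varphi$ is Euler's totient function, $\mu$ the M\''obius function, and the inner sum runs over the positive divisors $j$ of $ap$. *)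

(* Defs.v *)
From mathcomp Require Import all_boot all_order all_algebra.
Set Implicit Arguments. Unset Strict Implicit. Unset Printing Implicit Defensive.
Import Order.TTheory GRing.Theory Num.Theory.
Local Open Scope ring_scope.

(* Moebius function: mu(0) := 0 (irrelevant), mu(n) = (-1)^k if n is a
   product of k distinct primes, 0 if n has a square prime factor. *)
Definition moebius (n : nat) : int :=
  if n == 0%N then 0
  else if all (fun q => logn q n == 1%N) (primes n)
       then (-1) ^+ size (primes n) else 0.

Definition ordp (p : nat) (x : rat) : int :=
  (logn p `|numq x|%N)%:Z - (logn p `|denq x|%N)%:Z.

Definition Fbar (n : nat) : rat :=
  (\prod_(1 <= k < n.+1) \prod_(1 <= h < k.+1 | coprime h k)
     ((h%:R : rat) / (k%:R : rat)))^-1.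

(* Main.v *)
Require Import Defs.
From mathcomp Require Import all_boot all_order all_algebra.
From mathcomp Require Import zify ring lra.
Import Order.TTheory GRing.Theory Num.Theory.
Local Open Scope ring_scope.

Lemma ordp_frac p (a b : int) : a != 0 -> b != 0 ->
  ordp p (a%:~R / b%:~R) = (logn p `|a|)%:Z - (logn p `|b|)%:Z.
Proof.
move=> a0 b0; set x : rat := _ / _.
have x0 : x != 0 by rewrite /x mulf_neq0 ?invr_eq0 ?intr_eq0.
have e : a * denq x = numq x * b.
  apply: (@intr_inj rat); rewrite !intrM numqE /x.
  by rewrite [RHS]mulrAC divfK ?intr_eq0.
have := congr1 (fun z : int => logn p `|z|) e => /=.
rewrite !abszM !lognM ?absz_gt0 ?denq_neq0 ?numq_eq0 //.
rewrite /ordp => h.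
have : ((logn p `|a| + logn p `|denq x|)%N = (logn p `|numq x| + logn p `|b|)%N :> int) by rewrite h.
rewrite !PoszD => h2. rewrite -/x. lia.
Qed.

Lemma ordp_mul p (x y : rat) : x != 0 -> y != 0 ->
  ordp p (x * y) = ordp p x + ordp p y.
Proof.
move=> x0 y0.
have ex : x * y = (numq x * numq y)%:~R / (denq x * denq y)%:~R.
  by rewrite !intrM invfM mulrACA !divq_num_den.
rewrite ex ordp_frac ?mulf_neq0 ?numq_eq0 ?denq_neq0 //.
rewrite !abszM !lognM ?absz_gt0 ?numq_eq0 ?denq_neq0 // /ordp.
rewrite !PoszD; lia.
Qed.

Lemma ordp_inv p (x : rat) : x != 0 -> ordp p x^-1 = - ordp p x.
Proof.
move=> x0; rewrite -{1}[x]divq_num_den invf_div ordp_frac ?numq_eq0 ?denq_neq0 //.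
rewrite /ordp; lia.
Qed.

Lemma ordp_natfrac p (h k : nat) : (0 < h)%N -> (0 < k)%N ->
  ordp p (h%:R / k%:R) = (logn p h)%:Z - (logn p k)%:Z.
Proof.
move=> h0 k0; rewrite -[h%:R]/((h%:Z)%:~R : rat) -[k%:R]/((k%:Z)%:~R : rat).
by rewrite ordp_frac // -lt0n.
Qed.

Lemma ordp_prod p I (r : seq I) (P : pred I) (F : I -> rat) :
  (forall i, P i -> F i != 0) ->
  ordp p (\prod_(i <- r | P i) F i) = \sum_(i <- r | P i) ordp p (F i).
Proof.
move=> HF.
have [] := (@big_ind2 _ _ (fun x y => x != 0 /\ ordp p x = y) 1 *%R 0 +%R _ _ I r P F (fun i => ordp p (F i))); last first.
- by [].
- by move=> i Pi; split; [apply: HF|].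
- by move=> a b c d [a0 <-] [c0 <-]; split; [rewrite mulf_neq0 | rewrite ordp_mul].
- split; first exact: oner_neq0.
  by rewrite /ordp -[1]/(1%:Q) numq_int denq_int logn1.
Qed.

Lemma ordp_Fbar p n : ordp p (Fbar n) =
  \sum_(1 <= k < n.+1) \sum_(1 <= h < k.+1 | coprime h k)
     ((logn p k)%:Z - (logn p h)%:Z).
Proof.
rewrite /Fbar ordp_inv; last first.
  rewrite prodf_seq_neq0; apply/allP => k; rewrite mem_index_iota => /andP[k1 _].
  rewrite prodf_seq_neq0; apply/allP => h; rewrite mem_index_iota => /andP[h1 _].
  by apply/implyP => _; rewrite mulf_neq0 ?invr_eq0 ?pnatr_eq0 -?lt0n.
rewrite big_seq_cond ordp_prod; last first.
  move=> k /andP[]; rewrite mem_index_iota => /andP[k1 _] _.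
  rewrite prodf_seq_neq0; apply/allP => h; rewrite mem_index_iota => /andP[h1 _].
  by apply/implyP => _; rewrite mulf_neq0 ?invr_eq0 ?pnatr_eq0 -?lt0n.
rewrite -sumrN [RHS]big_seq_cond; apply: eq_bigr => k /andP[]; rewrite mem_index_iota => /andP[k1 _] _.
rewrite big_seq_cond ordp_prod; last first.
  move=> h /andP[]; rewrite mem_index_iota => /andP[h1 _] _.
  by rewrite mulf_neq0 ?invr_eq0 ?pnatr_eq0 -?lt0n.
rewrite -sumrN [RHS]big_seq_cond; apply: eq_bigr => h /andP[]; rewrite mem_index_iota => /andP[h1 _] _.
rewrite ordp_natfrac //; lia.
Qed.


Lemma moebius1 : moebius 1 = 1.
Proof. by rewrite /moebius; vm_compute. Qed.

Lemma primes_pM q j : prime q -> (0 < j)%N -> ~~ (q %| j)%N ->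
  perm_eq (primes (q * j)) (q :: primes j).
Proof.
move=> pq j0 nqj; apply: uniq_perm; first exact: primes_uniq.
  by rewrite /= primes_uniq andbT mem_primes pq j0 (negbTE nqj).
move=> x; rewrite in_cons !mem_primes muln_gt0 j0 prime_gt0 //=.
case px: (prime x) => /=; last by case: eqP px => // ->; rewrite pq.
by rewrite (Euclid_dvdM q j px) (dvdn_prime2 px pq).
Qed.

Lemma moebius_pM q j : prime q -> (0 < j)%N -> ~~ (q %| j)%N ->
  moebius (q * j) = - moebius j.
Proof.
move=> pq j0 nqj; have pe := primes_pM q j pq j0 nqj.
have q0 : (q == 0)%N = false by case: q pq {pe nqj}.
rewrite /moebius muln_eq0 q0 /=.
have -> : (j == 0)%N = false by case: j j0 nqj {pe}.
rewrite (perm_all _ pe) (perm_size pe) /=.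
have -> : logn q (q * j) = 1%N.
  by rewrite (lognM _ (prime_gt0 pq) j0) (logn_prime q pq) eqxx logn_coprime ?prime_coprime.
rewrite /=.
have -> : all (fun x => logn x (q * j) == 1%N) (primes j) = all (fun x => logn x j == 1%N) (primes j).
  apply: eq_in_all => x xj; rewrite (lognM _ (prime_gt0 pq) j0) (logn_prime x pq).
  have -> : (x == q) = false; last by [].
  by apply/negbTE/eqP => exq; move: xj; rewrite exq mem_primes (negbTE nqj) !andbF.
by case: ifP => _; rewrite ?oppr0 // exprS mulN1r.
Qed.

Lemma moebius_pdvd q j : prime q -> (0 < j)%N -> (q %| j)%N -> moebius (q * j) = 0.
Proof.
move=> pq j0 qj; rewrite /moebius.
case: ifP => // _.
have -> : all (fun x => logn x (q * j) == 1%N) (primes (q * j)) = false; last by [].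
apply/negbTE/allPn; exists q.
  by rewrite mem_primes pq muln_gt0 prime_gt0 // j0 dvdn_mulr.
rewrite (lognM _ (prime_gt0 pq) j0) (logn_prime q pq) eqxx.
have : (0 < logn q j)%N by rewrite logn_gt0 mem_primes pq j0 qj.
by case: (logn q j).
Qed.

Lemma big_mult (R : Type) (idx : R) (op : Monoid.law idx) (q N : nat) (F : nat -> R) :
  (0 < q)%N ->
  \big[op/idx]_(1 <= k < N.+1 | (q %| k)%N) F k =
  \big[op/idx]_(1 <= a < (N %/ q).+1) F (a * q)%N.
Proof.
move=> q0; elim: N => [|N IH]; first by rewrite div0n !big_geq.
rewrite big_mkcond /= big_nat_recr //= -big_mkcond /= IH divnS //.
case: ifP => qN; last by rewrite Monoid.mulm1.
have e : ((N %/ q).+1 = N.+1 %/ q)%N by rewrite divnS // qN.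
by rewrite add1n [RHS]big_nat_recr //= e divnK.
Qed.

Lemma sum_divisors (R : Type) (idx : R) (op : Monoid.com_law idx) m (F : nat -> R) :
  (0 < m)%N ->
  \big[op/idx]_(d <- divisors m) F d = \big[op/idx]_(1 <= d < m.+1 | (d %| m)%N) F d.
Proof.
move=> m0; rewrite -[RHS]big_filter; apply: perm_big; apply: uniq_perm.
- exact: divisors_uniq.
- by rewrite filter_uniq // iota_uniq.
move=> d; rewrite mem_filter mem_index_iota -dvdn_divisors //.
case dm: (d %| m)%N => //=; symmetry; apply/andP; split.
  by rewrite lt0n; apply/eqP => d0; move: dm; rewrite d0 dvd0n => /eqP m00; move: m0; rewrite m00.
by rewrite ltnS dvdn_leq.
Qed.

Lemma range_shrink (P : pred nat) (F : nat -> int) K M : (0 < K)%N -> (K <= M)%N ->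
  \sum_(1 <= a < M.+1 | (a %| K)%N && P a) F a =
  \sum_(1 <= a < K.+1 | (a %| K)%N && P a) F a.
Proof.
move=> K0 KM; rewrite (big_cat_nat _ (n := K.+1)) //= ?ltnS //.
rewrite [X in _ + X]big1_seq ?addr0 // => a /andP[/andP[aK _]].
rewrite mem_index_iota => /andP[Ka _].
by move: (dvdn_leq K0 aK); rewrite leqNgt Ka.
Qed.

Lemma moebius_sum g : (0 < g)%N ->
  \sum_(d <- divisors g) moebius d = (g == 1%N)%:R :> int.
Proof.
move=> g0; case: (ltngtP g 1) => [|g1|->]; first by rewrite ltnNge g0.
  have pq := pdiv_prime g1; set q := pdiv g in pq *.
  have q0 := prime_gt0 pq.
  have qg : (q %| g)%N := pdiv_dvd g.
  set g' := (g %/ q)%N.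
  have eg : g = (g' * q)%N by rewrite divnK.
  have g'0 : (0 < g')%N by rewrite divn_gt0 // dvdn_leq.
  have g'g : (g' <= g)%N by rewrite leq_div.
  rewrite sum_divisors // (bigID (dvdn q)) /=.
  rewrite (eq_bigl (fun d => (q %| d)%N && (d %| g)%N)); last by move=> d; rewrite andbC.
  rewrite big_mkcondr /= big_mult //.
  have -> : \sum_(1 <= i < (g %/ q).+1) (if (i * q %| g)%N then moebius (i * q) else 0)
      = - \sum_(1 <= a < g'.+1 | (a %| g')%N && ~~ (q %| a)%N) moebius a.
    rewrite -sumrN [RHS]big_mkcond /= -/g'; apply: eq_big_nat => a /andP[a1 _].
    rewrite {1}eg dvdn_pmul2r // mulnC.
    case: (a %| g')%N => /=; last by [].
    case qa: (q %| a)%N; first by rewrite moebius_pdvd.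
    by rewrite moebius_pM // qa.
  rewrite (eq_bigl (fun d => (d %| g')%N && ~~ (q %| d)%N)); last first.
    move=> d; case qd: (q %| d)%N; rewrite ?andbF ?andbT //=.
    by rewrite {1}eg Gauss_dvdl // coprime_sym prime_coprime // qd.
  by rewrite [X in _ + X]range_shrink // addNr.
by have -> : divisors 1%N = [:: 1%N] by []; rewrite big_seq1 moebius1.
Qed.

Lemma coprime_moebius k m : (0 < m)%N ->
  (coprime k m)%:R = \sum_(j <- divisors m) moebius j * (j %| k)%:R :> int.
Proof.
move=> m0.
rewrite (eq_bigr (fun j => if (j %| k)%N then moebius j else 0)); last first.
  by move=> j _; case: (j %| k)%N; rewrite ?mulr1 ?mulr0.
rewrite -big_mkcond -big_filter.
rewrite (perm_big (divisors (gcdn m k))); last first.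
  apply: uniq_perm; first by rewrite filter_uniq // divisors_uniq.
    exact: divisors_uniq.
  move=> d; rewrite mem_filter -!dvdn_divisors ?gcdn_gt0 ?m0 // dvdn_gcd andbC.
  by [].
by rewrite moebius_sum ?gcdn_gt0 ?m0 // coprime_sym.
Qed.

Lemma count_dvd j d : (0 < j)%N ->
  \sum_(1 <= k < d.+1) (j %| k)%:R = (d %/ j)%:R :> int.
Proof.
move=> j0; rewrite (eq_bigr (fun k => if (j %| k)%N then 1 else 0)); last first.
  by move=> k _; case: (j %| k)%N.
rewrite -big_mkcond big_mult // sumr_const_nat.
by rewrite subn1.
Qed.

Lemma count_coprime m d : (0 < m)%N ->
  \sum_(1 <= k < d.+1) (coprime k m)%:R =
  \sum_(j <- divisors m) moebius j * (d %/ j)%:R :> int.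
Proof.
move=> m0.
rewrite (eq_bigr _ (fun k _ => coprime_moebius k m m0)) exchange_big /=.
rewrite big_seq [RHS]big_seq; apply: eq_bigr => j jm.
have j0 : (0 < j)%N.
  by case: j jm => // ; rewrite -dvdn_divisors // dvd0n => /eqP m00; rewrite m00 in m0.
by rewrite -mulr_sumr count_dvd.
Qed.


Lemma logn_sum p x L : prime p -> (0 < x)%N -> (logn p x <= L)%N ->
  (logn p x)%:R = \sum_(1 <= b < L.+1) (p ^ b %| x)%:R :> int.
Proof.
move=> pp x0 lL.
rewrite (big_cat_nat _ (n := (logn p x).+1)) //= ?ltnS //.
rewrite [X in _ + X]big1_seq ?addr0; last first.
  move=> b /andP[_]; rewrite mem_index_iota => /andP[lb _].
  by rewrite pfactor_dvdn // leqNgt lb.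
rewrite (@eq_big_nat _ _ _ 1 (logn p x).+1 _ (fun _ => 1)); last first.
  by move=> b /andP[_ lb]; rewrite pfactor_dvdn // -ltnS lb.
by rewrite sumr_const_nat subn1.
Qed.

Lemma tri_swap (F : nat -> nat -> int) n :
  \sum_(1 <= k < n.+1) \sum_(1 <= h < k.+1) F h k =
  \sum_(1 <= h < n.+1) \sum_(h <= k < n.+1) F h k.
Proof.
elim: n => [|n IH]; first by rewrite !big_geq.
rewrite big_nat_recr //= IH.
rewrite [RHS]big_nat_recr //= big_nat1.
rewrite [in RHS](@eq_big_nat _ _ _ 1 n.+1 _ (fun h => \sum_(h <= k < n.+1) F h k + F h n.+1)); last first.
  by move=> h /andP[_ hn]; rewrite [LHS]big_nat_recr // ltnW.
rewrite [X in _ = X + _](@big_split int 0 (@GRing.add int)).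
by rewrite [X in _ + X = _]big_nat_recr //= addrA.
Qed.

Lemma totient_range k : (0 < k)%N ->
  totient k = (\sum_(1 <= h < k.+1) coprime h k)%N.
Proof.
move=> k0; rewrite totient_count_coprime.
rewrite big_nat_recr //= big_ltn //=.
rewrite [in LHS](eq_bigr (fun i => nat_of_bool (coprime i k))); last by move=> i _; rewrite coprime_sym.
rewrite addnC; congr (_ + _)%N.
by rewrite /coprime gcdn0 gcdnn.
Qed.

Lemma sum_coprime_const k (c : int) : (0 < k)%N ->
  \sum_(1 <= h < k.+1 | coprime h k) c = c * (totient k)%:R.
Proof.
move=> k0; rewrite totient_range // natr_sum mulr_sumr big_mkcond /=.
by apply: eq_bigr => h _; case: (coprime h k); rewrite ?mulr1 ?mulr0.
Qed.

Definition cc m x : int := \sum_(0 <= k < x) (coprime m k)%:R.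

Lemma cc_add m X : cc m (m + X) = (totient m)%:R + cc m X.
Proof.
rewrite /cc (big_cat_nat _ (n := m)) //= ?leq_addr //.
rewrite totient_count_coprime natr_sum; congr (_ + _).
rewrite -{1}[m]add0n big_addn addnC addnK.
by apply: eq_bigr => k _; rewrite /coprime gcdnDr.
Qed.

Lemma cc_mul m q r : cc m (q * m + r) = (q * totient m)%:R + cc m r.
Proof.
elim: q => [|q IH]; first by rewrite mul0n add0n add0r.
by rewrite mulSn -addnA cc_add IH addrA -natrD -mulSn.
Qed.

Lemma count_range m n : (1 < m)%N -> (m <= n)%N ->
  \sum_(m <= k < n.+1) (coprime m k)%:R =
  (n %/ m)%:R * (totient m)%:R - (totient m)%:R
    + \sum_(1 <= k < (n %% m).+1) (coprime k m)%:R :> int.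
Proof.
move=> m1 mn.
have e1 : cc m n.+1 = cc m m + \sum_(m <= k < n.+1) (coprime m k)%:R.
  by rewrite /cc (big_cat_nat _ (n := m)) //= ltnW.
have e2 : cc m m = (totient m)%:R by have := cc_add m 0; rewrite addn0 => ->; rewrite /cc big_geq // addr0.
have e3 : cc m n.+1 = (n %/ m * totient m)%:R + cc m (n %% m).+1.
  by rewrite -cc_mul addnS -divn_eq.
have e4 : cc m (n %% m).+1 = \sum_(1 <= k < (n %% m).+1) (coprime k m)%:R.
  rewrite /cc big_ltn //= /coprime gcdn0 (gtn_eqF m1) add0r.
  by apply: eq_bigr => k _; rewrite gcdnC.
rewrite natrM in e3.
have : \sum_(m <= k < n.+1) (coprime m k)%:R = cc m n.+1 - cc m m :> int.
  by rewrite e1 addrC addKr.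
move=> ->; rewrite e3 e2 e4; ring.
Qed.


Lemma logn_le_trunc p x n : prime p -> (0 < x)%N -> (x <= n)%N ->
  (logn p x <= trunc_log p n)%N.
Proof.
move=> pp x0 xn; apply: trunc_log_max; first exact: prime_gt1.
exact: leq_trans (dvdn_leq x0 (pfactor_dvdnn p x)) xn.
Qed.

Theorem theorem4p1 (p n : nat) (hp : prime p) (hn : (1 <= n)%N) :
  ordp p (Fbar n) =
  \sum_(1 <= b < (trunc_log p n).+1)
    \sum_(1 <= a < (n %/ p ^ b).+1)
      ((totient (a * p ^ b))%:Z * (2 - (n %/ (a * p ^ b))%:Z)
       - \sum_(j <- divisors (a * p)%N)
            moebius j * ((n %% (a * p ^ b)) %/ j)%:Z).
Proof.
rewrite ordp_Fbar.
transitivity (\sum_(1 <= k < n.+1) \sum_(1 <= h < k.+1 | coprime h k)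
   \sum_(1 <= b < (trunc_log p n).+1) ((p ^ b %| k)%:R - (p ^ b %| h)%:R : int)).
  apply: eq_big_nat => k /andP[k1 kn].
  rewrite big_seq_cond [RHS]big_seq_cond; apply: eq_bigr => h /andP[]; rewrite mem_index_iota => /andP[h1 hk] _.
  rewrite sumrB -!logn_sum //; first by rewrite !natz.
    by apply: logn_le_trunc => //; lia.
  by apply: logn_le_trunc.
rewrite (eq_bigr (fun k => \sum_(1 <= b < (trunc_log p n).+1) \sum_(1 <= h < k.+1 | coprime h k)
   ((p ^ b %| k)%:R - (p ^ b %| h)%:R : int))); last by move=> k _; exact: exchange_big.
rewrite exchange_big /=.
apply: eq_big_nat => b /andP[b1 bL].
rewrite (eq_bigr (fun k => \sum_(1 <= h < k.+1 | coprime h k) (p ^ b %| k)%:R - 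
   \sum_(1 <= h < k.+1 | coprime h k) (p ^ b %| h)%:R : int)); last by move=> k _; rewrite sumrB.
rewrite sumrB.
have pb0 : (0 < p ^ b)%N by rewrite expn_gt0 prime_gt0.
have hA : \sum_(1 <= k < n.+1) \sum_(1 <= h < k.+1 | coprime h k) (p ^ b %| k)%:R
    = \sum_(1 <= a < (n %/ p ^ b).+1) (totient (a * p ^ b))%:R :> int.
  rewrite (@eq_big_nat _ _ _ 1 n.+1 _ (fun k => if (p ^ b %| k)%N then (totient k)%:R else 0)); last first.
    by move=> k /andP[k1 _]; rewrite sum_coprime_const //; case: (_ %| _)%N; rewrite ?mul1r ?mul0r.
  by rewrite -big_mkcond big_mult.
have hB : \sum_(1 <= k < n.+1) \sum_(1 <= h < k.+1 | coprime h k) (p ^ b %| h)%:R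
    = \sum_(1 <= a < (n %/ p ^ b).+1) \sum_(a * p ^ b <= k < n.+1) (coprime (a * p ^ b) k)%:R :> int.
  rewrite (eq_bigr (fun k => \sum_(1 <= h < k.+1) (if coprime h k then (p ^ b %| h)%:R else 0))); last by move=> k _; rewrite big_mkcond.
  rewrite (tri_swap (fun h k => if coprime h k then (p ^ b %| h)%:R else 0)).
  rewrite (eq_bigr (fun h => if (p ^ b %| h)%N then \sum_(h <= k < n.+1) (coprime h k)%:R else 0)); last first.
    move=> h _; case: (p ^ b %| h)%N; last by rewrite big1 // => k _; case: coprime.
    by apply: eq_bigr => k _; case: coprime.
  by rewrite -big_mkcond big_mult.
rewrite hA hB -sumrB.
apply: eq_big_nat => a /andP[a1 an].
have mn : (a * p ^ b <= n)%N by rewrite -leq_divRL // -ltnS.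
have pb : (1 < p ^ b)%N.
  by rewrite (leq_trans (prime_gt1 hp)) // -{1}(expn1 p) leq_pexp2l // prime_gt0.
have m1 : (1 < a * p ^ b)%N by rewrite (leq_trans pb) // leq_pmull.
rewrite count_range //.
have -> : \sum_(1 <= k < (n %% (a * p ^ b)).+1) (coprime k (a * p ^ b))%:R
   = \sum_(1 <= k < (n %% (a * p ^ b)).+1) (coprime k (a * p))%:R :> int.
  by apply: eq_bigr => k _; rewrite !coprimeMr coprime_pexpr.
rewrite count_coprime ?muln_gt0 ?a1 ?prime_gt0 //.
have -> : \sum_(j <- divisors (a * p)) moebius j * ((n %% (a * p ^ b)) %/ j)%:R
   = \sum_(j <- divisors (a * p)) moebius j * ((n %% (a * p ^ b)) %/ j)%:Z.
  by apply: eq_bigr => j _; rewrite natz.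
rewrite !natz; ring.
Qed.
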